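(* Let $E$ be a Banach lattice. Then the set $B_{UDP}(E)$ of all $uaw$-Dunford-Pettis operators on $E$ is a subalgebra of the algebra $B(E)$ of all bounded operators on $E$.
   Context: A net $(x_\alpha)$ in a Banach lattice $E$ is $uaw$-convergent to $x$ if $|x_\alpha-x|\wedge u\to 0$ weakly for every $u\in E_+$. A bounded operator $T\colon E\to E$ is $uaw$-Dunford-Pettis if for every norm bounded sequence $(x_n)$ in $E$ that is $uaw$-convergent to $0$ one has $\|Tx_n\|\to 0$. *)

(* Defs.v *)
From HB Require Import structures.
From mathcomp Require Import all_boot all_order all_algebra.
From mathcomp Require Import all_classical all_reals.
From mathcomp Require Import topology normedtype sequences.
Set Implicit Arguments. Unset Strict Implicit. Unset Printing Implicit Defensive.
Import Order.TTheory GRing.Theory Num.Theory.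
Import numFieldNormedType.Exports.
Local Open Scope classical_set_scope.
Local Open Scope ring_scope.

Section BanachLattice.
Variables (R : realType) (E : completeNormedModType R).

Variable join : E -> E -> E.

Definition bl_le (x y : E) : Prop := join x y = y.
Definition bl_meet (x y : E) : E := - join (- x) (- y).
Definition bl_abs (x : E) : E := join x (- x).

Definition is_banach_lattice : Prop :=
  [/\ (forall x, join x x = x) /\ (forall x y, join x y = join y x),
      (forall x y z, join x (join y z) = join (join x y) z),
      (forall x y z, join (x + z) (y + z) = join x y + z),
      (forall (a : R) x y, 0 <= a -> join (a *: x) (a *: y) = a *: join x y)
    & (forall x y, bl_le (bl_abs x) (bl_abs y) -> `|x| <= `|y|) ].

Definition linear_map (V W : normedModType R) (T : V -> W) : Prop :=
  forall (a : R) (x y : V), T (a *: x + y) = a *: T x + T y.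
Definition bounded_linear (V W : normedModType R) (T : V -> W) : Prop :=
  linear_map T /\ exists M : R, forall x, `|T x| <= M * `|x|.

Definition bounded_ops : set (E -> E) := [set T | bounded_linear T].

Definition weakly_null (x : nat -> E) : Prop :=
  forall f : E -> R^o, bounded_linear f -> (fun n => f (x n)) @ \oo --> (0 : R).

Definition uaw_null (x : nat -> E) : Prop :=
  forall u : E, bl_le 0 u -> weakly_null (fun n => bl_meet (bl_abs (x n)) u).

Definition norm_bounded_seq (x : nat -> E) : Prop :=
  exists M : R, forall n, `|x n| <= M.

Definition uaw_DP (T : E -> E) : Prop :=
  bounded_linear T /\
  forall x : nat -> E, norm_bounded_seq x -> uaw_null x ->
    (fun n => `|T (x n)|) @ \oo --> (0 : R).

Definition B_UDP : set (E -> E) := [set T | uaw_DP T].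

Definition is_subalgebra_of_BE (S : set (E -> E)) : Prop :=
  [/\ S `<=` bounded_ops,
      S (fun _ => 0),
      (forall T U, S T -> S U -> S (fun x => T x + U x)),
      (forall (a : R) T, S T -> S (fun x => a *: T x))
    & (forall T U, S T -> S U -> S (T \o U)) ].

End BanachLattice.

(* Main.v *)
Require Import Defs.
From mathcomp Require Import all_boot all_order all_algebra.
From mathcomp Require Import all_classical all_reals.
From mathcomp Require Import topology normedtype sequences.
Import Order.TTheory GRing.Theory Num.Theory.
Import numFieldNormedType.Exports.
Local Open Scope classical_set_scope.
Local Open Scope ring_scope.

Lemma sq0 (R : realType) (g h : nat -> R) :
  (forall n, 0 <= g n <= h n) -> h @ \oo --> (0 : R) -> g @ \oo --> (0 : R).
Proof.
move=> H hc; apply: (@squeeze_cvgr _ _ _ _ (fun=> 0) h g).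
- by apply: nearW.
- exact: cvg_cst.
- exact: hc.
Qed.

Theorem corollary2p8 (R : realType) (E : completeNormedModType R)
  (join : E -> E -> E) (HE : is_banach_lattice join) :
  is_subalgebra_of_BE (B_UDP join).
Proof.
split.
- by move=> T [].
- split.
    split; first by move=> a x y; rewrite scaler0 addr0.
    by exists 0 => x; rewrite normr0 mul0r.
  move=> x _ _; rewrite normr0; exact: cvg_cst.
- move=> T U [[lT [MT bT]] cT] [[lU [MU bU]] cU]; split.
    split.
      by move=> a x y; rewrite lT lU scalerDr !addrA; congr (_ + _);
        rewrite -!addrA; congr (_ + _); rewrite addrC.
    exists (MT + MU) => x; rewrite mulrDl.
    by apply: le_trans (ler_normD _ _) _; apply: lerD.
  move=> x bx ux.
  apply: (@sq0 _ _ (fun n => `|T (x n)| + `|U (x n)|)).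
    by move=> n; rewrite normr_ge0 ler_normD.
  rewrite -[0 : R]addr0; apply: cvgD; [exact: cT | exact: cU].
- move=> a T [[lT [MT bT]] cT]; split.
    split.
      by move=> b x y; rewrite lT scalerDr !scalerA mulrC.
    exists (`|a| * MT) => x; rewrite normrZ -mulrA.
    by apply: ler_wpM2l => //.
  move=> x bx ux.
  apply: (@sq0 _ _ (fun n => `|a| * `|T (x n)|)).
    by move=> n; rewrite normr_ge0 normrZ lexx.
  have := @cvgMl_tmp _ _ _ _ _ `|a| _ (cT x bx ux); rewrite mulr0; exact.
- move=> T U [[lT [MT bT]] cT] [[lU [MU bU]] cU]; split.
    split.
      by move=> a x y /=; rewrite lU lT.
    exists (Num.max MT 0 * MU) => x /=.
    apply: le_trans (bT _) _.
    apply: le_trans (_ : Num.max MT 0 * `|U x| <= _).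
      by apply: ler_wpM2r => //; rewrite le_max lexx.
    rewrite -mulrA; apply: ler_wpM2l => //; by rewrite le_max lexx orbT.
  move=> x bx ux.
  apply: (@sq0 _ _ (fun n => Num.max MT 0 * `|U (x n)|)).
    move=> n; rewrite normr_ge0 /=; apply: le_trans (bT _) _.
    by apply: ler_wpM2r => //; rewrite le_max lexx.
  have := @cvgMl_tmp _ _ _ _ _ (Num.max MT 0) _ (cU x bx ux); rewrite mulr0; exact.
Qed.
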